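(* Let $n=p_1^{\alpha_1}p_2^{\alpha_2}\cdots p_r^{\alpha_r}$, where $r\geq 2$, $\alpha_1,\ldots,\alpha_r$ are positive integers and $p_1<p_2<\cdots<p_r$ are primes. Let $m=p_{k_1}^{\beta_{k_1}}p_{k_2}^{\beta_{k_2}}\cdots p_{k_s}^{\beta_{k_s}}$, where $2\leq s\leq r$, $k_1<k_2<\cdots<k_s$ and $1\leq\beta_{k_i}\leq\alpha_{k_i}$ for $1\leq i\leq s$. Suppose that at least one of the following holds: (i) $2\phi(p_1p_2\cdots p_r)\geq p_1p_2\cdots p_r$; (ii) $\phi(p_{j+1})\geq r\,\phi(p_j)$ for each $j\in\{1,2,\ldots,r-1\}$. Then $\deg(m)>\deg(m/p_{k_i})$ in $\mathcal{P}(C_n)$ for every $i\in\{1,2,\ldots,s-1\}$.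
   Context: For a finite group $G$, the power graph $\mathcal{P}(G)$ is the simple undirected graph with vertex set $G$ in which two distinct vertices are adjacent if one is an integral power of the other. $C_n$ denotes the cyclic group of order $n$, identified with $\mathbb{Z}_n=\{0,1,\ldots,n-1\}$, so a positive divisor $d$ of $n$ is regarded as the element $d\bmod n\in\mathbb{Z}_n$. $\deg(a)$ is the degree of vertex $a$ in $\mathcal{P}(C_n)$ and $\phi$ is Euler's totient function. *)

(* Defs.v *)
From mathcomp Require Import all_boot all_order all_algebra all_fingroup all_solvable.
Set Implicit Arguments. Unset Strict Implicit. Unset Printing Implicit Defensive.

(* The cyclic group C_n is the additive group 'Z_n (= 'I_n for n >= 2),
   whose finGroupType structure is addition mod n; so x ^+ k is k*x mod n
   and <[x]> is the set of all integral "powers" (multiples) of x. *)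

Definition pg_adj (n : nat) (a b : 'Z_n) : bool :=
  (a != b) && ((a \in <[b]>%g) || (b \in <[a]>%g)).

Definition pg_deg (n d : nat) : nat :=
  #|[set b : 'Z_n | pg_adj (inZp d) b]|.

(* Main.v *)
Require Import Defs.
From mathcomp Require Import all_boot all_order all_algebra all_fingroup all_solvable.
From mathcomp Require Import zify.
Set Implicit Arguments. Unset Strict Implicit. Unset Printing Implicit Defensive.
Lemma tot_prod_primes (s : seq nat) : uniq s -> all prime s ->
  totient (\prod_(l <- s) l) = \prod_(l <- s) l.-1.
Proof.
elim: s => [|l s IH] /=; first by rewrite !big_nil.
case/andP=> ls us /andP[pl ps]; rewrite !big_cons totient_coprime.
  by rewrite totient_prime // IH.
rewrite prime_coprime // Euclid_dvd_prod //.
elim: s ls ps {us IH} => [|x s IH]; first by rewrite big_nil.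
rewrite inE negb_or big_cons /= => /andP[lx ls] /andP[px ps].
by rewrite dvdn_prime2 // (negbTE lx) IH.
Qed.

Lemma L1 d : 0 < d -> forall s, uniq s -> all prime s ->
  {subset primes d <= s} ->
  d * \prod_(l <- s) l.-1 <= (\prod_(l <- s) l) * totient d.
Proof.
elim: d {-2}d (leqnn d) => [|N IH] d; first by case: d.
move=> dN d0 s us ps sub.
have [d1|d1] := leqP d 1.
  have -> : d = 1 by lia.
  by rewrite mul1n muln1; apply: leq_prod => l _; exact: leq_pred.
set l := pdiv d.
have pl : prime l by exact: pdiv_prime.
have ls : l \in s by apply: sub; rewrite mem_primes pl d0 pdiv_dvd.
have [d' cop def] := pfactor_coprime pl d0.
have e0 : 0 < logn l d by rewrite logn_gt0 mem_primes pl d0 pdiv_dvd.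
set e := logn l d in e0 def.
have d'0 : 0 < d' by move: d0; rewrite def muln_gt0 => /andP[].
have le2 : 2 <= l ^ e.
  by apply: (leq_trans (prime_gt1 pl)); rewrite -{1}(expn1 l) leq_pexp2l // prime_gt0.
have d'lt : d' <= N.
  have : d' * 2 <= d by rewrite def leq_mul2l le2 orbT.
  lia.
have IH' := IH d' d'lt d'0 (rem l s) (rem_uniq l us).
have ps' : all prime (rem l s).
  by apply/allP=> x /mem_rem xs; exact: (allP ps x xs).
have sub' : {subset primes d' <= rem l s}.
  move=> x; rewrite mem_primes => /and3P[px _ xd']; rewrite mem_rem_uniq // inE.
  apply/andP; split; last first.
    by apply: sub; rewrite mem_primes px d0 def dvdn_mulr.
  apply/eqP=> xl; move: cop; rewrite -xl prime_coprime // xd' //.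
have {}IH' := IH' ps' sub'.
have pe := perm_to_rem ls.
rewrite (perm_big _ pe) [X in _ <= X * _](perm_big _ pe) !big_cons.
rewrite def totient_coprime; last by apply: coprimeXr; rewrite coprime_sym.
rewrite totient_pfactor //.
set P1 := \prod_(_ <- _) _.-1 in IH' *; set P2 := \prod_(_ <- _) _ in IH' *.
have -> : l ^ e = l * l ^ e.-1 by rewrite -expnS prednK.
set t := totient d' in IH' *; set le := l ^ e.-1.
have : d' * P1 * (l * le * l.-1) <= P2 * t * (l * le * l.-1) by rewrite leq_mul2r IH' orbT.
rewrite -!mulnA; move=> H.
move: H; rewrite /=; move=> H. apply: (leq_trans _ (leq_trans H _)); apply: eq_leq; lia.
Qed.

Lemma Psorted (s : seq nat) : forall c, (forall x, x \in s -> c.+2 <= x) ->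
  sorted ltn s ->
  (\prod_(x <- s) x) * c.+1 <= (size s + c).+1 * \prod_(x <- s) x.-1.
Proof.
elim: s => [|l s IH] c hs srt; first by rewrite !big_nil /=; lia.
rewrite !big_cons /=.
have hl : c.+2 <= l by apply: hs; rewrite inE eqxx.
have srt' : sorted ltn s by move: srt => /= /path_sorted.
have hs' : forall x, x \in s -> c.+1.+2 <= x.
  move=> x xs; have := order_path_min ltn_trans srt.
  by move/allP/(_ x xs) => /= lx; lia.
have := IH c.+1 hs' srt'.
set A := \prod_(_ <- _) _; set B := \prod_(_ <- _) _.-1 => H.
have H2 : l * c.+1 <= l.-1 * c.+2 by lia.
have : l * A * c.+1 * c.+2 <= (size s + c).+2 * (l.-1 * B) * c.+2.
  have := leq_mul H2 H.
  move=> H3; apply: (leq_trans _ (leq_trans H3 _)); apply: eq_leq; lia.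
move=> H4.
have : l * A * c.+1 <= (size s + c).+2 * (l.-1 * B).
  by rewrite -(leq_pmul2r (ltn0Sn c.+1)).
move=> H5; apply: (leq_trans _ (leq_trans H5 _)); apply: eq_leq; lia.
Qed.

Lemma Kbound d : 0 < d -> d <= totient d * (size (primes d)).+1.
Proof.
move=> d0.
have pa : all prime (primes d).
  by apply/allP=> x; rewrite mem_primes => /and3P[].
have h1 := L1 d0 (primes_uniq d) pa (fun x h => h).
have h2 := Psorted (c := 0) (s := primes d)
  (fun x => (fun h => prime_gt1 (allP pa x h))) (sorted_primes d).
set P1 := \prod_(_ <- _) _.-1 in h1 h2; set P2 := \prod_(_ <- _) _ in h1 h2.
have P10 : 0 < P1.
  rewrite /P1 big_seq prodn_cond_gt0 // => x /(allP pa) px.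
  by have := prime_gt1 px; lia.
rewrite addn0 muln1 in h2.
rewrite -(leq_pmul2r P10) (leq_trans h1) // mulnC.
by rewrite -mulnA leq_mul2l h2 orbT.
Qed.

Lemma totient_mul_prime d l : prime l -> 0 < d ->
  totient (d * l) = (if l %| d then l else l.-1) * totient d.
Proof.
move=> pl d0; case: ifP => ld; last first.
  rewrite totient_coprime; last by rewrite coprime_sym prime_coprime // ld.
  by rewrite (totient_prime pl) mulnC.
have [d' cop def] := pfactor_coprime pl d0.
have e0 : 0 < logn l d by rewrite logn_gt0 mem_primes pl d0 ld.
set e := logn l d in e0 def.
have c1 : coprime d' (l ^ e) by apply: coprimeXr; rewrite coprime_sym.
have c2 : coprime d' (l ^ e.+1) by apply: coprimeXr; rewrite coprime_sym.
clearbody e; rewrite def -mulnA -expnSr !totient_coprime // !totient_pfactor //.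
have -> : l ^ e = l * l ^ e.-1 by rewrite -expnS prednK.
rewrite /=; lia.
Qed.


Section G0.
Open Scope group_scope.
Section Grp.
Variables (gT : finGroupType) (g : gT).
Hypothesis Hg : <[g]> = [set: gT].

Lemma cycT : cyclic [set: gT]%G.
Proof. by rewrite /= -Hg cycle_cyclic. Qed.

Lemma mem_cycE (x y : gT) : (y \in <[x]>) = (#[y] %| #[x])%N.
Proof.
by rewrite -cycle_subG /order (cardSg_cyclic cycT) ?subsetT.
Qed.

Definition Aset (o : nat) : {set gT} := [set y | (#[y] %| o) || (o %| #[y])]%N.

Lemma ord_h k : (k %| #[g])%N -> #[g ^+ (#[g] %/ k)] = k.
Proof.
move=> kd; have g0 := order_gt0 g.
rewrite orderXdiv; last exact: dvdn_div.
by rewrite divnA // mulKn.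
Qed.

Lemma card_D k : (k %| #[g])%N -> #|[set y : gT | #[y] %| k]%N| = k.
Proof.
move=> kd; have oh := ord_h kd.
rewrite -{2}oh /order; apply: eq_card => y; rewrite inE.
by rewrite mem_cycE oh.
Qed.

Lemma card_O k : (k %| #[g])%N -> #|[set y : gT | #[y] == k]| = totient k.
Proof.
move=> kd; have oh := ord_h kd.
rewrite -{2}oh totient_gen; apply: eq_card => y; rewrite !inE /generator.
rewrite (eq_subG_cyclic cycT) ?subsetT // -!/(order _) oh eq_sym.
by [].
Qed.

Lemma count_main d p q : prime p -> prime q -> p != q ->
  (d * p %| #[g])%N -> (d * q %| #[g])%N ->
  (d * p < totient (d * q) + totient (d * p) + d)%N ->
  (#|Aset (d * p)| < #|Aset d|)%N.
Proof.
move=> pp pq npq dp dq ineq.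
have g0 := order_gt0 g.
have d0 : (0 < d)%N by have := dvdn_gt0 g0 dp; rewrite muln_gt0 => /andP[].
have p1 := prime_gt1 pp.
have ddp : (d %| d * p)%N by apply: dvdn_mulr.
set Ad := Aset d; set Ap := Aset (d * p).
have e1 := cardsID Ap Ad; have e2 := cardsID Ad Ap.
rewrite setIC in e2.
have X1 : (totient (d * q) <= #|Ad :\: Ap|)%N.
  rewrite -card_O //; apply: subset_leq_card; apply/subsetP => y.
  rewrite !inE => /eqP ->; rewrite (dvdn_mulr q (dvdnn d)) orbT /=.
  by rewrite !dvdn_pmul2l // !dvdn_prime2 // eq_sym (negbTE npq) /=.
set S1 := Ap :\: Ad; set S2 := [set y : gT | #[y] == d * p]%N;
set S3 := [set y : gT | #[y] %| d]%N.
have i23 : S2 :&: S3 = set0.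
  apply/setP=> y; rewrite !inE; apply/negP => /andP[/eqP -> h].
  have := dvdn_leq d0 h; rewrite -[X in _ <= X]muln1 leq_pmul2l //.
  by rewrite leqNgt p1.
have i1 : S1 :&: (S2 :|: S3) = set0.
  apply/setP=> y; rewrite !inE; apply/negP => /andP[/andP[h1 h2] h3].
  rewrite negb_or in h1; case/andP: h1 => n1 n2.
  case/orP: h3 => [/eqP e | h]; first by rewrite e ddp in n2.
  by rewrite h in n1.
have sub : S1 :|: (S2 :|: S3) \subset [set y : gT | #[y] %| d * p]%N.
  apply/subsetP => y; rewrite !inE.
  case/orP => [/andP[h1 h2]|/orP[/eqP ->|h]]; last 2 first.
  - by rewrite dvdnn.
  - exact: dvdn_trans h ddp.
  case/orP: h2 => // h2; move: h1; rewrite negb_or => /andP[_ /negP []].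
  exact: dvdn_trans ddp h2.
have := subset_leq_card sub; rewrite card_D //.
have c1 := cardsUI S1 (S2 :|: S3); have c2 := cardsUI S2 S3.
rewrite i1 i23 cards0 !addn0 in c1 c2.
rewrite c1 c2 card_O // card_D; last exact: dvdn_trans ddp dp.
rewrite /S1 => X2; lia.
Qed.

Lemma deg_eq (x : gT) :
  (#|[set b | (x != b) && ((x \in <[b]>) || (b \in <[x]>))]|).+1 = #|Aset #[x]|.
Proof.
have xA : x \in Aset #[x] by rewrite inE dvdnn.
rewrite (cardsD1 x (Aset #[x])) xA add1n; congr _.+1; apply: eq_card => b.
rewrite !inE !mem_cycE eq_sym orbC.
by [].
Qed.
End Grp.
End G0.
Lemma arith1 p q d t r tp : 1 < p -> 0 < t -> 0 < q ->
  p.-1 * d <= p.-1 * (t * r.+1) -> r * p.-1 * t <= q.-1 * t ->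
  p.-1 * t <= tp * t -> d * p < q * t + tp * t + d.
Proof.
case: p => [|P] // _; case: q => [|Q] // t0 _ /=.
have e : P * (t * r.+1) = r * P * t + P * t.
  by rewrite mulnS mulnDr addnC [r * P]mulnC -mulnA [t * r]mulnC.
rewrite e mulnS mulSn [d * P]mulnC.
move: (P * d) (r * P * t) (Q * t) (P * t) (tp * t) => a b c e' f.
lia.
Qed.
Lemma arith2 p q d t r tp tq : 1 < p -> 0 < p.-1 * t ->
  p.-1 * d <= p.-1 * (t * r) -> r * p.-1 * t <= q.-1 * t ->
  q.-1 * t <= tq * t -> p.-1 * t <= tp * t -> d * p < tq * t + tp * t + d.
Proof.
case: p => [|P] // _ /=.
have e : P * (t * r) = r * P * t by rewrite [r * P]mulnC -mulnA [t * r]mulnC.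
rewrite e mulnS [d * P]mulnC.
move: (P * d) (r * P * t) (q.-1 * t) (P * t) (tp * t) (tq * t) => a b c e' f g.
lia.
Qed.
Lemma arith3 p q d t tp tq : 1 < p -> 0 < t ->
  p.-1 * d <= p.-1 * (2 * t) -> p * t <= q.-1 * t ->
  q.-1 * t <= tq * t -> p.-1 * t <= tp * t -> d * p < tq * t + tp * t + d.
Proof.
case: p => [|P] // _ /= t0.
rewrite mulnCA mul2n -addnn mulnS mulSn [d * P]mulnC.
move: (P * d) (P * t) (q.-1 * t) (tp * t) (tq * t) => a b c e' f.
lia.
Qed.

Lemma deg_compare N m p q : 0 < m -> m %| N.+2 -> prime p -> prime q -> p != q ->
  p %| m -> q %| m ->
  (N.+2 %/ m) * p < totient ((N.+2 %/ m) * q) + totient ((N.+2 %/ m) * p) + N.+2 %/ m ->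
  pg_deg N.+2 (m %/ p) < pg_deg N.+2 m.
Proof.
move=> m0 mn pp pq npq pm qm key.
set d := N.+2 %/ m in key.
have nd : N.+2 = d * m by rewrite divnK.
have p0 := prime_gt0 pp.
have mp : m = (m %/ p) * p by rewrite divnK.
pose g : 'Z_(N.+2) := Zp1.
have Hg : <[g]>%g = [set: 'Z_(N.+2)] by rewrite -Zp_cycle.
have og : #[g]%g = N.+2 by rewrite order_Zp1.
have ox : forall k, k %| N.+2 -> #[(inZp k : 'Z_(N.+2))]%g = N.+2 %/ k.
  move=> k kn; have -> : (inZp k : 'Z_(N.+2)) = (g ^+ k)%g.
    by rewrite Zp_expg; apply: val_inj; rewrite /= mul1n.
  by rewrite orderXdiv og.
have mpn : m %/ p %| N.+2 by apply: dvdn_trans mn; apply: dvdn_div.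
have o1 := ox m mn; have o2 := ox _ mpn.
have e2 : N.+2 %/ (m %/ p) = d * p.
  by rewrite {1}nd {1}mp mulnA mulnAC mulnK // divn_gt0 // dvdn_leq.
rewrite /pg_deg /pg_adj.
have D1 := deg_eq Hg (inZp m); have D2 := deg_eq Hg (inZp (m %/ p)).
rewrite o1 in D1; rewrite o2 e2 in D2.
have dp : d * p %| #[g]%g.
  rewrite og; apply: dvdn_trans (dvdn_mul (dvdnn d) pm) _; rewrite -nd //.
have dq : d * q %| #[g]%g.
  rewrite og; apply: dvdn_trans (dvdn_mul (dvdnn d) qm) _; rewrite -nd //.
have := count_main Hg pp pq npq dp dq key.
by rewrite -ltnS D2 -/d -D1.
Qed.

Theorem proposition4p1 (n m : nat) :
  2 <= size (primes n) ->
  0 < m -> m %| n -> 2 <= size (primes m) ->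
  (2 * totient (\prod_(p <- primes n) p) >= \prod_(p <- primes n) p
   \/ (forall j, j.+1 < size (primes n) ->
         totient (nth 0 (primes n) j.+1) >=
           size (primes n) * totient (nth 0 (primes n) j))) ->
  forall i, i.+1 < size (primes m) ->
    pg_deg n m > pg_deg n (m %/ nth 0 (primes m) i).
Proof.
move=> r2 m0 mn sm2 hyp i hi.
have n1 : 1 < n.
  case: (ltnP 1 n) => // h; move: r2.
  by have /eqP -> : primes n == [::] by rewrite primes_eq0.
have n0 : 0 < n by lia.
set p := nth 0 (primes m) i; set q := nth 0 (primes m) i.+1.
have pmi : p \in primes m by apply: mem_nth; exact: ltnW.
have qmi : q \in primes m by apply: mem_nth.
move: (pmi); rewrite mem_primes => /and3P[pp _ pdm].
move: (qmi); rewrite mem_primes => /and3P[pq _ qdm].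
have plq : p < q.
  apply: (sorted_ltn_nth ltn_trans 0 (sorted_primes m)); rewrite ?inE //; lia.
have npq : p != q by rewrite neq_ltn plq.
have pn : p \in primes n by rewrite mem_primes pp n0 (dvdn_trans pdm mn).
have qn : q \in primes n by rewrite mem_primes pq n0 (dvdn_trans qdm mn).
set d := n %/ m.
have d0 : 0 < d by rewrite divn_gt0 // dvdn_leq.
have dn : d %| n by apply: dvdn_div.
have pdn : {subset primes d <= primes n}.
  by move=> x; rewrite !mem_primes => /and3P[-> _ xd]; rewrite n0 (dvdn_trans xd dn).
suff key : d * p < totient (d * q) + totient (d * p) + d.
  have [N eN] : exists N, n = N.+2 by exists n.-2; case: (n) n1 => [|[|]].
  move: mn key; rewrite /d eN => mn key.
exact: (deg_compare m0 mn pp pq npq pdm qdm key).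
rewrite (totient_mul_prime pq d0) (totient_mul_prime pp d0).
set t := totient d.
have t0 : 0 < t by rewrite totient_gt0.
set tq := (if q %| d then q else q.-1).
set tp := (if p %| d then p else p.-1).
have htp : p.-1 <= tp by rewrite /tp; case: ifP => // _; exact: leq_pred.
have htq : q.-1 <= tq by rewrite /tq; case: ifP => // _; exact: leq_pred.
have p1 := prime_gt1 pp.
have hp2 : p.-1 * t <= tp * t by rewrite leq_mul2r htp orbT.
have hq2 : q.-1 * t <= tq * t by rewrite leq_mul2r htq orbT.
case: hyp => [h1|h2].
  have pa : all prime (primes n) by apply/allP=> x; rewrite mem_primes => /and3P[].
  have hL := L1 d0 (primes_uniq n) pa pdn.
  rewrite -tot_prod_primes ?primes_uniq // in hL.
  set R := \prod_(_ <- _) _ in hL h1.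
  have P10 : 0 < totient R by rewrite totient_gt0 /R big_seq prodn_cond_gt0 // => x /(allP pa) /prime_gt0.
  have hd : d <= 2 * t.
    have : d * totient R <= 2 * t * totient R.
      apply: (leq_trans hL); apply: leq_trans (leq_mul h1 (leqnn t)) _.
      by rewrite mulnAC.
    by rewrite leq_pmul2r.
  have : p.-1 * d <= p.-1 * (2 * t) by rewrite leq_mul2l hd orbT.
  move=> h; have hq3 : p * t <= q.-1 * t.
    by rewrite leq_mul2r; apply/orP; right; rewrite -ltnS prednK // prime_gt0.
  exact: (arith3 p1 t0 h hq3 hq2 hp2).
set r := size (primes n) in h2 r2.
set a := index p (primes n); set b := index q (primes n).
have ar : a < r by rewrite index_mem.
have br : b < r by rewrite index_mem.
have pa' : nth 0 (primes n) a = p := nth_index 0 pn.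
have qb : nth 0 (primes n) b = q := nth_index 0 qn.
have ab : a < b.
  case: (ltngtP a b) => // h.
    have := sorted_ltn_nth ltn_trans 0 (sorted_primes n).
    move=> /(_ b a); rewrite !inE qb pa' => /(_ br ar h) => qp.
    by have := ltn_trans plq qp; rewrite ltnn.
  by move: npq; rewrite -pa' -qb h eqxx.
have a1r : a.+1 < r by apply: leq_ltn_trans br.
have pr1 : prime (nth 0 (primes n) a.+1).
  by have := mem_nth 0 a1r; rewrite mem_primes => /and3P[].
have hx := h2 a a1r.
rewrite pa' (totient_prime pp) (totient_prime pr1) in hx.
have hle : nth 0 (primes n) a.+1 <= q.
  case: (ltngtP a.+1 b) => h; last by rewrite h qb.
    have := sorted_ltn_nth ltn_trans 0 (sorted_primes n).
    move=> /(_ a.+1 b); rewrite !inE qb => /(_ a1r br h) => /ltnW //.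
  by move: h; rewrite ltnS leqNgt ab.
have hq : r * p.-1 <= q.-1 by apply: leq_trans hx _; rewrite -!subn1 leq_sub2r.
have K := Kbound d0.
case: (boolP (q %| d)) => qd.
  have tqq : tq = q by rewrite /tq qd.
  have sz : size (primes d) <= r by apply: uniq_leq_size (primes_uniq d) pdn.
  have h3 : d <= t * r.+1 by apply: leq_trans K _; rewrite leq_mul2l ltnS sz orbT.
  have h4 : p.-1 * d <= p.-1 * (t * r.+1) by rewrite leq_mul2l h3 orbT.
  have h5 : r * p.-1 * t <= q.-1 * t by rewrite leq_mul2r hq orbT.
  rewrite tqq; exact: (arith1 p1 t0 (prime_gt0 pq) h4 h5 hp2).
have sz : size (primes d) <= r.-1.
  rewrite /r -(size_rem qn); apply: uniq_leq_size (primes_uniq d) _.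
  move=> x xd; rewrite mem_rem_uniq ?primes_uniq // inE pdn // andbT.
  apply/eqP=> xq; move: xd; rewrite xq mem_primes => /and3P[_ _ qd'].
  by rewrite qd' in qd.
have r0 : 0 < r by lia.
have h3 : d <= t * r by apply: leq_trans K _; rewrite leq_mul2l -(prednK r0) ltnS sz orbT.
have h4 : p.-1 * d <= p.-1 * (t * r) by rewrite leq_mul2l h3 orbT.
have h5 : r * p.-1 * t <= q.-1 * t by rewrite leq_mul2r hq orbT.
have h6 : 0 < p.-1 * t by rewrite muln_gt0 t0 andbT -subn1 subn_gt0.
exact: (arith2 p1 h6 h4 h5 hq2 hp2).
Qed.
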